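(* Let $\phi$ be a strictly convex norm on $\mathbf{R}^n$ of class $\mathcal{C}^2$ on $\mathbf{R}^n\setminus\{0\}$ and $K\subseteq\mathbf{R}^n$ closed. Then $r^\phi_K:N^\phi(K)\to(0,\infty]$ is upper semicontinuous. Moreover, $$N^\phi(K)=\{(\xi^\phi_K(x),\nu^\phi_K(x)):x\in\mathbf{R}^n\setminus(K\cup\mathrm{Cut}^\phi(K))\}$$ and $r^\phi_K(\xi^\phi_K(x),\nu^\phi_K(x))=\delta^\phi_K(x)\,\rho^\phi_K(x)$ for all $x\in\mathbf{R}^n\setminus(K\cup\mathrm{Cut}^\phi(K))$.
   Context: A norm $\phi$ is strictly convex if $\phi(a+b)=\phi(a)+\phi(b)$ implies $\phi(b)a=\phi(a)b$. For closed $K$: $\delta^\phi_K(x)=\inf\{\phi(y-x):y\in K\}$; $\xi^\phi_K(x)=K\cap\{w:\phi(x-w)=\delta^\phi_K(x)\}$ (a singleton, identified with its element, for $x\notin K\cup\mathrm{Cut}^\phi(K)$); $\nu^\phi_K(x)=\delta^\phi_K(x)^{-1}(x-\xi^\phi_K(x))$ for $x\notin K$; $\rho^\phi_K(x)=\sup\bigl(\mathbf{R}\cap\{s:\delta^\phi_K(a+s(x-a))=s\,\delta^\phi_K(x)\}\bigr)$ for any $a\in\xi^\phi_K(x)$; $N^\phi(K)=\{(a,\eta)\in\mathbf{R}^n\times\mathbf{R}^n:a\in K,\ \phi(\eta)=1,\ \delta^\phi_K(a+s\eta)=s\text{ for some }s>0\}$; $r^\phi_K(a,\eta)=\sup\{s>0:\delta^\phi_K(a+s\eta)=s\}$;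 $\mathrm{Cut}^\phi(K)=\{a+r^\phi_K(a,\eta)\eta:(a,\eta)\in N^\phi(K),\ r^\phi_K(a,\eta)<\infty\}$. Upper semicontinuity refers to the topology of $N^\phi(K)\subseteq\mathbf{R}^{2n}$. *)

(* Defs.v *)
From HB Require Import structures.
From mathcomp Require Import all_boot all_order all_algebra.
From mathcomp Require Import all_classical all_reals all_analysis.
Set Implicit Arguments. Unset Strict Implicit. Unset Printing Implicit Defensive.
Import Order.TTheory GRing.Theory Num.Theory.
Import numFieldNormedType.Exports.
Local Open Scope classical_set_scope.
Local Open Scope ring_scope.

Section Defs.
Variables (R : realType) (n : nat).
Notation V := 'rV[R]_n.

Definition is_norm (phi : V -> R) : Prop :=
  [/\ forall x, 0 <= phi x,
      forall x, phi x = 0 -> x = 0,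
      forall (c : R) x, phi (c *: x) = `|c| * phi x
    & forall x y, phi (x + y) <= phi x + phi y].

Definition strictly_convex_norm (phi : V -> R) : Prop :=
  forall a b, phi (a + b) = phi a + phi b -> phi b *: a = phi a *: b.

Definition ebase (i : 'I_n) : V := delta_mx 0 i.

Definition C2_on (f : V -> R) (U : set V) : Prop :=
  open U /\
  forall x, U x ->
    [/\ {for x, continuous f},
        forall i, derivable f x (ebase i) /\
                  {for x, continuous ('D_(ebase i) f)}
      & forall i j, derivable ('D_(ebase i) f) x (ebase j) /\
                  {for x, continuous ('D_(ebase j) ('D_(ebase i) f))}].

Variables (phi : V -> R) (K : set V).

Definition dist (x : V) : R := inf [set phi (y - x) | y in K].

Definition xi (x : V) : set V := [set w | K w /\ phi (x - w) = dist x].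

(* nu for a chosen nearest point a (xi x is a singleton off K u Cut) *)
Definition nu (x a : V) : V := (dist x)^-1 *: (x - a).

Definition rho (x a : V) : \bar R :=
  ereal_sup [set s%:E | s in [set s : R | dist (a + s *: (x - a)) = s * dist x]].

Definition normal_bundle : set (V * V) :=
  [set p | K p.1 /\ phi p.2 = 1 /\
           exists s : R, 0 < s /\ dist (p.1 + s *: p.2) = s].

Definition reach (p : V * V) : \bar R :=
  ereal_sup [set s%:E | s in [set s : R | 0 < s /\ dist (p.1 + s *: p.2) = s]].

Definition cut_locus : set V :=
  [set p.1 + fine (reach p) *: p.2 | p in
     [set p | normal_bundle p /\ (reach p < +oo)%E]].

End Defs.

Definition usc_on {R : realType} {X : topologicalType} (A : set X)
  (f : X -> \bar R) : Prop :=
  forall p, A p -> forall t : R, (f p < t%:E)%E ->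
    \forall q \near p, A q -> (f q < t%:E)%E.

(* Main.v *)
Require Import Defs.
From HB Require Import structures.
From mathcomp Require Import all_boot all_order all_algebra.
From mathcomp Require Import all_classical all_reals all_analysis.
From mathcomp Require Import ring lra.
Set Implicit Arguments. Unset Strict Implicit.
Import Order.TTheory GRing.Theory Num.Theory.
Import numFieldNormedType.Exports.
Local Open Scope classical_set_scope.
Local Open Scope ring_scope.
Section Aux.
Variables (R : realType) (n : nat) (phi : 'rV[R]_n -> R).
Hypothesis hphi : is_norm phi.

Lemma phi_ge0 x : 0 <= phi x. Proof. by case: hphi. Qed.
Lemma phi_eq0 x : phi x = 0 -> x = 0. Proof. by case: hphi => _ h _ _; apply: h. Qed.
Lemma phiZ c x : phi (c *: x) = `|c| * phi x. Proof. by case: hphi => _ _ h _; apply: h. Qed.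
Lemma phiD x y : phi (x + y) <= phi x + phi y. Proof. by case: hphi => _ _ _ h; apply: h. Qed.
Lemma phi0 : phi 0 = 0.
Proof. by rewrite -(scale0r (0 : 'rV[R]_n)) phiZ normr0 mul0r. Qed.
Lemma phiN x : phi (- x) = phi x.
Proof. by rewrite -scaleN1r phiZ normrN normr1 mul1r. Qed.
Lemma phiB x y : phi (x - y) = phi (y - x).
Proof. by rewrite -phiN opprB. Qed.
Lemma phi_lip x y : phi x <= phi y + phi (x - y).
Proof. by have := phiD (x - y) y; rewrite subrK addrC. Qed.

Lemma coord_le (v : 'rV[R]_n) i : `|v 0 i| <= `|v|.
Proof.
rewrite [leRHS]/Num.Def.normr /= mx_normrE; apply/bigmax_geP; right => /=.
by exists (0, i).
Qed.

Lemma phi_le_norm : exists2 C, 0 <= C & forall v, phi v <= C * `|v|.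
Proof.
exists (\sum_(i < n) phi 'e_i); first by apply: sumr_ge0 => i _; exact: phi_ge0.
move=> v; rewrite {1}(row_sum_delta v) mulr_suml.
apply: (le_trans (y := \sum_(i < n) phi (v 0 i *: 'e_i))).
  elim/big_ind2: _ => //; first by rewrite phi0.
  by move=> a b c d h1 h2; apply: le_trans (phiD _ _) _; apply: lerD.
apply: ler_sum => i _; rewrite phiZ mulrC; apply: ler_wpM2l; first exact: phi_ge0.
exact: coord_le.
Qed.

Lemma phi_dist x y : `|phi x - phi y| <= phi (x - y).
Proof.
rewrite ler_norml; apply/andP; split.
  have := phi_lip y x; rewrite phiB; lra.
have := phi_lip x y; lra.
Qed.

Lemma small_mul (C d e : R) : 0 <= C -> 0 <= d -> 0 < e -> d < e / (C + 1) -> C * d < e.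
Proof.
move=> C0 d0 e0; rewrite ltr_pdivlMr; last lra.
move=> h; apply: le_lt_trans h; rewrite mulrC; apply: ler_wpM2l => //; lra.
Qed.

Lemma phi_cont : continuous phi.
Proof.
have [C C0 hC] := phi_le_norm.
move=> x; apply/(@cvgrPdist_lt _ _ _ (nbhs x) (nbhs_filter x)) => e e0; near=> y.
apply: le_lt_trans (phi_dist _ _) _; apply: le_lt_trans (hC _) _.
apply: small_mul => //.
near: y; apply: (@cvgr_dist_lt _ _ _ (nbhs x) _ id x); first exact: cvg_id.
apply: divr_gt0 => //; lra.
Unshelve. all: by end_near.
Qed.
End Aux.

Section Dist.
Variables (R : realType) (n : nat) (phi : 'rV[R]_n -> R) (K : set 'rV[R]_n).
Hypothesis hphi : is_norm phi.
Hypothesis hK : K !=set0.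
Local Notation D := (dist phi K).

Lemma dist_lb x : lbound [set phi (y - x) | y in K] 0.
Proof. by move=> _ [y _ <-]; exact: phi_ge0. Qed.

Lemma dist_le x y : K y -> D x <= phi (y - x).
Proof. move=> Ky; apply: ge_inf; last by exists y.
by exists 0; exact: dist_lb. Qed.

Lemma dist_ge0 x : 0 <= D x.
Proof.
apply: lb_le_inf; last exact: dist_lb.
by case: hK => y Ky; exists (phi (y - x)); exists y.
Qed.

Lemma dist_approx x e : 0 < e -> exists2 y, K y & phi (y - x) < D x + e.
Proof.
move=> e0; have hi : has_inf [set phi (y - x) | y in K].
  split; last by exists 0; exact: dist_lb.
  by case: hK => y Ky; exists (phi (y - x)); exists y.
have [z [y Ky <-] h] := inf_adherent e0 hi.
by exists y.
Qed.

Lemma dist_lip x y : D x <= D y + phi (x - y).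
Proof.
rewrite -lerBlDr; apply: lb_le_inf.
  by case: hK => z Kz; exists (phi (z - y)); exists z.
move=> _ [z Kz <-]; rewrite lerBlDr.
apply: le_trans (dist_le x Kz) _.
have -> : z - x = (z - y) + (y - x) by rewrite addrA subrK.
by apply: le_trans (phiD hphi _ _) _; rewrite (phiB hphi y x).
Qed.

Lemma dist_in x : K x -> D x = 0.
Proof.
move=> Kx; apply/le_anti/andP; split; last exact: dist_ge0.
by apply: le_trans (dist_le x Kx) _; rewrite subrr (phi0 hphi).
Qed.

Lemma ray_le a e s : K a -> phi e = 1 -> 0 <= s -> D (a + s *: e) <= s.
Proof.
move=> Ka e1 s0; apply: le_trans (dist_le _ Ka) _.
by rewrite opprD addrA subrr add0r (phiN hphi) (phiZ hphi) e1 mulr1 ger0_norm.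
Qed.

Lemma ray_interval a e s s' : K a -> phi e = 1 -> D (a + s *: e) = s ->
  0 <= s' -> s' <= s -> D (a + s' *: e) = s'.
Proof.
move=> Ka e1 hs s'0 s's; apply/le_anti/andP; split; first exact: ray_le.
have := dist_lip (a + s *: e) (a + s' *: e).
rewrite hs opprD addrACA subrr add0r -scalerBl (phiZ hphi) e1 mulr1 ger0_norm; lra.
Qed.


Local Notation S a e := [set s : R | 0 < s /\ D (a + s *: e) = s].

Lemma reachE a e : reach phi K (a, e) = ereal_sup [set s%:E | s in S a e].
Proof. by []. Qed.

Lemma reach_ub a e s : 0 < s -> D (a + s *: e) = s -> (s%:E <= reach phi K (a, e))%E.
Proof. by move=> s0 hs; rewrite reachE; apply: ereal_sup_ubound; exists s. Qed.

Lemma reach_lt a e s : K a -> phi e = 1 -> 0 < s -> (s%:E < reach phi K (a, e))%E ->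
  D (a + s *: e) = s.
Proof.
move=> Ka e1 s0; rewrite reachE => /ereal_sup_gt [_ [t [t0 ht] <-]].
rewrite lte_fin => st; apply: (ray_interval Ka e1 ht); lra.
Qed.

Lemma reach_le a e M : (forall s, 0 < s -> D (a + s *: e) = s -> s <= M) ->
  (reach phi K (a, e) <= M%:E)%E.
Proof.
move=> h; rewrite reachE; apply: ge_ereal_sup => _ [s [s0 hs] <-].
by rewrite lee_fin; apply: h.
Qed.

Lemma reach_fin a e r : K a -> phi e = 1 -> 0 < r -> reach phi K (a, e) = r%:E ->
  D (a + r *: e) = r.
Proof.
move=> Ka e1 r0 hr; apply/le_anti/andP; split; first by apply: ray_le => //; lra.
rewrite leNgt; apply/negP => hlt.
set f := D (a + r *: e) in hlt.
have f0 : 0 <= f by apply: dist_ge0.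
pose s := (f + 3 * r) / 4.
have hs : D (a + s *: e) = s.
  apply: reach_lt => //; first by rewrite /s; lra.
  by rewrite hr lte_fin /s; lra.
have := dist_lip (a + s *: e) (a + r *: e).
rewrite hs -/f opprD addrACA subrr add0r -scalerBl (phiZ hphi) e1 mulr1 ler0_norm.
  rewrite /s; lra.
rewrite /s; lra.
Qed.


Lemma uniq_near a e b s s0 : strictly_convex_norm phi -> K b -> phi e = 1 ->
  0 < s -> s < s0 -> phi (a + s *: e - b) = s ->
  D (a + s0 *: e) = s0 -> b = a.
Proof.
move=> hsc Kb e1 s0p ss0 hb hy.
set x := a + s *: e in hb; set y := a + s0 *: e in hy.
have hyx : y - x = (s0 - s) *: e by rewrite /x /y opprD addrACA subrr add0r scalerBl.
have pyx : phi (y - x) = s0 - s by rewrite hyx (phiZ hphi) e1 mulr1 ger0_norm //; lra.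
have heq : phi ((y - x) + (x - b)) = phi (y - x) + phi (x - b).
  apply/le_anti/andP; split; first exact: phiD.
  rewrite pyx hb subrK addrA subrK -(phiB hphi) -hy.
  have := dist_le y Kb; lra.
have := hsc _ _ heq; rewrite hb pyx hyx scalerA => h.
have hxb : x - b = s *: e.
  apply: (@scalerI _ _ (s0 - s)); first by rewrite subr_eq0; apply/eqP => E; lra.
  by rewrite -h scalerA mulrC.
have -> : b = x - (x - b) by rewrite opprB addrC subrK.
by rewrite hxb /x addrK.
Qed.

End Dist.

Section Exist.
Variables (R : realType) (n : nat) (phi : 'rV[R]_n -> R).
Hypothesis hphi : is_norm phi.

Lemma lip_cont (f : 'rV[R]_n -> R) C : 0 <= C ->
  (forall x y, `|f x - f y| <= C * `|x - y|) -> continuous f.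
Proof.
move=> C0 hC x; apply/(@cvgrPdist_lt _ _ _ (nbhs x) (nbhs_filter x)) => e e0; near=> y.
apply: le_lt_trans (hC _ _) _.
apply: small_mul => //.
near: y; apply: (@cvgr_dist_lt _ _ _ (nbhs x) _ id x); first exact: cvg_id.
apply: divr_gt0 => //; lra.
Unshelve. all: by end_near.
Qed.

Lemma coercive : exists2 c, 0 < c & forall v : 'rV[R]_n, c * `|v| <= phi v.
Proof.
case: (pselect (exists w : 'rV[R]_n, w != 0)) => [[w w0]|hno]; last first.
  exists 1 => // v; case: (eqVneq v 0) => [->|v0]; last by exfalso; apply: hno; exists v.
  by rewrite normr0 mulr0; exact: phi_ge0.
pose S := [set v : 'rV[R]_n | `|v| = 1].
have S0 : S !=set0.
  exists (`|w|^-1 *: w); rewrite /S /= normrZ normfV normr_id mulVf //.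
  by rewrite normr_eq0.
have cS : compact S.
  apply: bounded_closed_compact.
    rewrite /= /bounded_near; near=> M => v /= Sv; rewrite Sv.
    by near: M; apply: nbhs_pinfty_ge.
  have -> : S = Num.norm @^-1` [set 1] by [].
  apply: preimage_closed; last exact: closed_eq.
  by move=> x _; apply: norm_continuous.
have [c0 Sc0 hmin] := EVT_min_rV S0 cS (continuous_subspaceT (phi_cont hphi)).
have c0S : S c0 by rewrite inE in Sc0.
have c0pos : 0 < phi c0.
  rewrite lt_neqAle phi_ge0 // andbT eq_sym; apply/eqP => /(phi_eq0 hphi) h.
  by move: c0S; rewrite /S /= h normr0 => /eqP; rewrite eq_sym oner_eq0.
exists (phi c0) => // v; case: (eqVneq v 0) => [->|v0].
  by rewrite normr0 mulr0; exact: phi_ge0.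
have nv : 0 < `|v| by rewrite normr_gt0.
have : phi c0 <= phi (`|v|^-1 *: v).
  apply: hmin; rewrite inE /S /= normrZ normfV normr_id mulVf //.
  by rewrite normr_eq0.
rewrite (phiZ hphi) normfV normr_id ler_pdivlMl // => h.
by rewrite mulrC.
Unshelve. all: by end_near.
Qed.


Lemma norm_le_M (c d M : R) (v : 'rV[R]_n) : 0 < c -> c * `|v| <= d -> M = d / c -> `|v| <= M.
Proof. by move=> c0 h ->; rewrite ler_pdivlMr // mulrC. Qed.

Lemma exists_nearest (K : set 'rV[R]_n) x : closed K -> K !=set0 ->
  exists a, K a /\ phi (x - a) = dist phi K x.
Proof.
move=> Kc hK.
have [c c0 hc] := coercive.
have [C C0 hC] := phi_le_norm hphi.
set d := dist phi K x.
pose M := (d + 1) / c.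
pose A := K `&` [set y | `|y - x| <= M].
have A0 : A !=set0.
  have [y Ky hy] := dist_approx hphi hK x (@ltr01 R).
  exists y; split => //=; apply: (norm_le_M c0 _ erefl).
  by apply: le_trans (hc _) _; apply: ltW.
have cA : compact A.
  apply: bounded_closed_compact.
    rewrite /= /bounded_near; near=> Mb => v /= [_ hv].
    have : `|v| <= `|v - x| + `|x|.
      by have := ler_normD (v - x) x; rewrite subrK.
    move=> h; apply: le_trans h _; apply: le_trans (lerD hv (lexx _)) _.
    near: Mb; apply: nbhs_pinfty_ge; exact: num_real.
  apply: closedI => //.
  have -> : [set y | `|y - x| <= M] = (fun y => `|y - x|) @^-1` [set r | r <= M] by [].
  apply: preimage_closed; last exact: closed_le.
  move=> y _; apply: (@lip_cont _ 1) => // z t.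
  rewrite mul1r; have := ler_dist_dist (z - x) (t - x).
  by rewrite opprB addrA subrK.
have fc : continuous (fun y : 'rV[R]_n => phi (y - x)).
  apply: (@lip_cont _ C) => // z t; apply: le_trans (phi_dist hphi _ _) _.
  by rewrite opprB addrA subrK; apply: hC.
have [a Aa hmin] := EVT_min_rV A0 cA (continuous_subspaceT fc).
move: Aa; rewrite inE => -[Ka _].
exists a; split => //; apply/le_anti/andP; split; last first.
  by rewrite (phiB hphi); apply: dist_le.
rewrite leNgt; apply/negP => hgt.
set e := Num.min 1 (phi (x - a) - d).
have /andP[e1 e2] : (e <= 1) && (e <= phi (x - a) - d) by rewrite -le_min.
have e0 : 0 < e by rewrite lt_min ltr01 subr_gt0.
have [y Ky hy] := dist_approx hphi hK x e0.
have hy' : phi (y - x) < d + e := hy.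
have Ay : y \in A.
  rewrite inE; split => //=; apply: (norm_le_M c0 _ erefl).
  apply: le_trans (hc _) _; apply: ltW; apply: lt_le_trans hy' _; lra.
have := hmin _ Ay; rewrite /= (phiB hphi a x); lra.
Unshelve. all: by end_near.
Qed.

End Exist.

Section Main.
Variables (R : realType) (n : nat) (phi : 'rV[R]_n -> R) (K : set 'rV[R]_n).
Hypothesis hphi : is_norm phi.
Hypothesis hsc : strictly_convex_norm phi.
Hypothesis hKc : closed K.
Hypothesis hK : K !=set0.
Local Notation D := (dist phi K).
Local Notation N := (normal_bundle phi K).
Local Notation reach := (reach phi K).

Lemma ray_id (a x : 'rV[R]_n) (d : R) : d != 0 -> a + d *: (d^-1 *: (x - a)) = x.
Proof. by move=> d0; rewrite scalerA mulfV // scale1r addrC subrK. Qed.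

Lemma nu_norm (a x : 'rV[R]_n) (d : R) : 0 < d -> phi (x - a) = d -> phi (d^-1 *: (x - a)) = 1.
Proof.
by move=> d0 h; rewrite (phiZ hphi) h ger0_norm ?invr_ge0 ?ltW // mulVf // gt_eqF.
Qed.

Lemma dist_pos x a : ~ K x -> K a -> phi (x - a) = D x -> 0 < D x.
Proof.
move=> nKx Ka h; rewrite lt_neqAle dist_ge0 // andbT eq_sym; apply/eqP => h0.
by apply: nKx; move: h; rewrite h0 => /(phi_eq0 hphi) /eqP; rewrite subr_eq0 => /eqP ->.
Qed.

Lemma reach_pos p : N p -> (0 < reach p)%E.
Proof.
case: p => a e [/= Ka [e1 [s [s0 hs]]]].
by apply: lt_le_trans (reach_ub s0 hs); rewrite lte_fin.
Qed.

Lemma reach_real p : N p -> (reach p < +oo)%E -> exists2 r, 0 < r & reach p = r%:E.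
Proof.
move=> Np hfin; have h0 := reach_pos Np.
case E: (reach p) h0 hfin => [r| |] //; rewrite lte_fin => r0 _.
by exists r.
Qed.

Lemma cut_of_two x a b : ~ K x -> K a -> K b -> phi (x - a) = D x ->
  phi (x - b) = D x -> a != b -> cut_locus phi K x.
Proof.
move=> nKx Ka Kb ha hb ab.
have d0 := dist_pos nKx Ka ha.
set d := D x in ha hb d0.
pose e := d^-1 *: (x - a).
have e1 : phi e = 1 by apply: nu_norm.
have hx : a + d *: e = x by apply: ray_id; rewrite gt_eqF.
have hr : reach (a, e) = d%:E.
  apply/le_anti/andP; split; last by apply: reach_ub => //; rewrite hx.
  apply: reach_le => s s0 hs; rewrite leNgt; apply/negP => ds.
  have := uniq_near (a := a) hphi hsc Kb e1 d0 ds; rewrite hx => /(_ hb hs) ba.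
  by move: ab; rewrite ba eqxx.
exists (a, e); last by rewrite /= hr /= hx.
split; last by rewrite hr ltry.
by split => //; split => //; exists d; split => //; rewrite hx.
Qed.


Lemma reach_usc : usc_on N reach.
Proof.
move=> p Np t ht.
have [r r0 hr] := reach_real Np (lt_trans ht (ltry t)).
have rt : r < t by rewrite -lte_fin -hr.
case: p Np hr ht => a e Np hr ht.
have [/= Ka [e1 _]] := Np.
pose s' := (r + t) / 2.
have s'0 : 0 < s' by rewrite /s'; lra.
have hlt : D (a + s' *: e) < s'.
  rewrite lt_neqAle ray_le ?andbT //; last by apply: ltW.
  apply/eqP => h; have := reach_ub s'0 h; rewrite hr lee_fin /s'; lra.
pose g := s' - D (a + s' *: e).
have g0 : 0 < g by rewrite /g; lra.
have [C C0 hC] := phi_le_norm hphi.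
have sC0 : 0 <= s' * C by apply: mulr_ge0 => //; apply: ltW.
near=> q => Nq.
have [Kq [eq1 _]] := Nq.
have h1 : phi (q.1 - a) < g / 2.
  apply: le_lt_trans (hC _) _.
  apply: (small_mul C0 (normr_ge0 _) (_ : 0 < g / 2)); first by rewrite /g; lra.
  rewrite distrC.
  near: q; apply: (@cvgr_dist_lt _ _ _ (nbhs (a, e)) _ fst); first exact: cvg_fst.
  by apply: divr_gt0; rewrite /g; lra.
have h2 : s' * phi (q.2 - e) < g / 2.
  apply: le_lt_trans (ler_wpM2l (ltW s'0) (hC _)) _; rewrite mulrA.
  apply: (small_mul sC0 (normr_ge0 _) (_ : 0 < g / 2)); first by rewrite /g; lra.
  rewrite distrC.
  near: q; apply: (@cvgr_dist_lt _ _ _ (nbhs (a, e)) _ snd); first exact: cvg_snd.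
  by apply: divr_gt0; rewrite /g; lra.
have hq : D (q.1 + s' *: q.2) < s'.
  have := dist_lip hphi hK (q.1 + s' *: q.2) (a + s' *: e).
  have -> : q.1 + s' *: q.2 - (a + s' *: e) = (q.1 - a) + s' *: (q.2 - e).
    by rewrite scalerBr opprD addrACA.
  have := phiD hphi (q.1 - a) (s' *: (q.2 - e)).
  rewrite (phiZ hphi) ger0_norm; last by apply: ltW.
  rewrite /g in h1 h2; lra.
have : (reach q <= s'%:E)%E.
  have -> : reach q = reach (q.1, q.2) by rewrite -surjective_pairing.
  apply: reach_le => s s0 hs; rewrite leNgt; apply/negP => ss.
  have := ray_interval hphi hK Kq eq1 hs (ltW s'0) (ltW ss).
  by move=> h; move: hq; rewrite /= h ltxx.
move=> h; apply: le_lt_trans h _; rewrite lte_fin /s'; lra.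
Unshelve. all: by end_near.
Qed.


Lemma xi_single x : ~ K x -> ~ cut_locus phi K x -> exists a, xi phi K x = [set a].
Proof.
move=> nKx nCx.
have [a [Ka ha]] := exists_nearest hphi x hKc hK.
exists a; apply/seteqP; split => b /=; last by move=> ->.
move=> [Kb hb]; apply/eqP; apply/negP => /negP ba.
by apply: nCx; apply: (cut_of_two nKx Ka Kb ha hb); rewrite eq_sym.
Qed.

Lemma N_sub p : N p -> exists2 x, (~ K x /\ ~ cut_locus phi K x) &
  xi phi K x = [set p.1] /\ p.2 = nu phi K x p.1.
Proof.
case: p => a e [/= Ka [e1 [s0 [s0p hs0]]]] /=.
pose s := s0 / 2.
have sp : 0 < s by rewrite /s; lra.
have ss0 : s < s0 by rewrite /s; lra.
pose x := a + s *: e.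
have hx : D x = s by apply: (ray_interval hphi hK Ka e1 hs0); rewrite /s; lra.
have hxa : phi (x - a) = s.
  by rewrite /x addrC addKr (phiZ hphi) e1 mulr1 ger0_norm // ltW.
have hxi : xi phi K x = [set a].
  apply/seteqP; split => b /=; last by move=> ->; split => //; rewrite hxa hx.
  move=> [Kb hb]; apply: (uniq_near hphi hsc Kb e1 sp ss0) => //.
  by rewrite hb.
have nKx : ~ K x by move=> /(dist_in hphi hK); rewrite hx => h; move: sp; rewrite h ltxx.
exists x; last first.
  split => //; rewrite /nu hx /x addrC addKr scalerA mulVf ?scale1r //.
  by rewrite gt_eqF.
split => // -[[a' e'] [Np' hfin] /= hx'].
have [/= Ka' [e1' _]] := Np'.
have [r' r'0 hr'] := reach_real Np' hfin.
rewrite hr' /= in hx'.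
have hd : D x = r' by rewrite -hx'; apply: reach_fin.
have ha' : a' \in xi phi K x.
  rewrite inE; split => //; rewrite hd -hx' addrC addKr (phiZ hphi) e1' mulr1 ger0_norm //.
  by apply: ltW.
rewrite hxi inE /= in ha'; subst a'.
have rs : r' = s by rewrite -hd hx.
rewrite rs in hx' hr'.
have ee : e' = e.
  apply: (@scalerI _ _ s); first by rewrite gt_eqF.
  by apply: (addrI a); rewrite hx'.
subst e'.
have := reach_ub s0p hs0; rewrite hr' lee_fin; lra.
Qed.

Lemma N_sup x a : ~ K x -> xi phi K x = [set a] -> N (a, nu phi K x a).
Proof.
move=> nKx hxi.
have : xi phi K x a by rewrite hxi.
move=> [Ka ha].
have d0 := dist_pos nKx Ka ha.
split => //=; split; first by apply: nu_norm.
exists (D x); split => //; rewrite /nu ray_id //; by rewrite gt_eqF.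
Qed.


Lemma reach_rho x a : ~ K x -> xi phi K x = [set a] ->
  reach (a, nu phi K x a) = ((D x)%:E * rho phi K x a)%E.
Proof.
move=> nKx hxi.
have : xi phi K x a by rewrite hxi.
move=> [Ka ha].
have d0 := dist_pos nKx Ka ha.
set d := D x in ha d0 *.
have dn0 : d != 0 by rewrite gt_eqF.
have key t : a + (d * t) *: nu phi K x a = a + t *: (x - a).
  by rewrite /nu scalerA mulrAC mulfV // mul1r.
rewrite /rho -ereal_sup_pZl //.
apply/le_anti/andP; split.
  apply: ge_ereal_sup => _ [s [s0 hs] <-].
  apply: ereal_sup_ubound; exists (s / d)%:E; first exists (s / d) => //.
    by rewrite /= -key mulrCA mulfV // mulr1 hs -/d divfK.
  by rewrite /= -EFinM mulrCA mulfV // mulr1.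
apply: ge_ereal_sup => _ [_ [t ht <-] <-]; rewrite -EFinM.
have hd : (d%:E <= reach (a, nu phi K x a))%E.
  by apply: reach_ub => //; rewrite /nu ray_id.
case: (leP t 0) => t0.
  apply: le_trans hd; rewrite lee_fin; apply: le_trans (ltW d0).
  by rewrite pmulr_rle0.
apply: reach_ub; first by apply: mulr_gt0.
by rewrite key ht mulrC.
Qed.

End Main.

Unset Implicit Arguments.
Theorem lemma2p35 (R : realType) (n : nat) (phi : 'rV[R]_n -> R)
  (K : set 'rV[R]_n) :
  is_norm phi -> strictly_convex_norm phi ->
  C2_on phi [set x | x != 0] ->
  closed K -> K !=set0 ->
  let N := normal_bundle phi K in
  let Cut := cut_locus phi K in
  let good := [set x | ~ K x /\ ~ Cut x] in
  [/\ (forall p, N p -> (0 < reach phi K p)%E),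
      usc_on N (reach phi K),
      (forall x, good x -> exists a, xi phi K x = [set a]),
      N = [set p | exists2 x, good x &
                    xi phi K x = [set p.1] /\ p.2 = nu phi K x p.1]
    & forall x a, good x -> xi phi K x = [set a] ->
        reach phi K (a, nu phi K x a) = ((dist phi K x)%:E * rho phi K x a)%E].
Proof.
move=> hphi hsc _ hKc hK N Cut good; split.
- by move=> p; apply: reach_pos.
- exact: (reach_usc hphi hK).
- by move=> x [nKx nCx]; apply: (xi_single hphi hsc hKc hK).
- apply/seteqP; split => p.
    by move=> Np; apply: (N_sub hphi hsc hK).
  case: p => a e [x [nKx nCx] /= [hxi ->]].
  exact: (N_sup hphi hK nKx hxi).
- by move=> x a [nKx _] hxi; apply: (reach_rho hphi hK nKx hxi).
Qed.
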